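(* Let $N\ge 1$ and let $0=p_1<p_2<\cdots<p_N$ be integers (the sensor positions, in units of $d$). Define $$\Phi^u=\{p_{l_1}+p_{l_2}+p_{l_3}\}\cup\{p_{l_1}+p_{l_2}-p_{l_3}\}\cup\{-p_{l_1}-p_{l_2}+p_{l_3}\}\cup\{-p_{l_1}-p_{l_2}-p_{l_3}\},$$ where in each set the indices $l_1,l_2,l_3$ range independently over $\{1,2,\dots,N\}$, and $\Phi^u$ is an ordinary set (repeated values counted once). Then $$6N-5\;\le\;|\Phi^u|\;\le\;k(N):=\frac{4N^3+3N^2-N+3}{3}.$$
   Context: $\Phi^u$ is the set of virtual sensor positions of the third-order exhaustive co-array (TO-ECA) of the linear array with physical sensors at $p_1,\dots,p_N$; it is the union of the underlying sets of the four third-order co-arrays obtained from the cumulants $\mathrm{cum}\{x,x,x\}$, $\mathrm{cum}\{x,x,x^*\}$, $\mathrm{cum}\{x^*,x^*,x\}$, $\mathrm{cum}\{x^*,x^*,x^*\}$ of the received signal vector. *)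

(* Defs.v *)
From mathcomp Require Import all_boot all_order all_algebra.
Set Implicit Arguments. Unset Strict Implicit. Unset Printing Implicit Defensive.
Import Order.TTheory GRing.Theory Num.Theory.
Local Open Scope ring_scope.

(* All values f (p l1) (p l2) (p l3), l1 l2 l3 ranging independently over 'I_N
   (0-based indices; sensor l is p l). *)
Definition triple_vals (N : nat) (p : 'I_N -> int) (f : int -> int -> int -> int)
  : seq int :=
  flatten [seq flatten [seq [seq f (p l1) (p l2) (p l3) | l3 <- enum 'I_N]
                           | l2 <- enum 'I_N] | l1 <- enum 'I_N].

Definition Phi_u (N : nat) (p : 'I_N -> int) : seq int :=
  undup (triple_vals p (fun a b c => a + b + c)
      ++ triple_vals p (fun a b c => a + b - c)
      ++ triple_vals p (fun a b c => - a - b + c)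
      ++ triple_vals p (fun a b c => - a - b - c)).

(* Main.v *)
Require Import Defs.
From mathcomp Require Import all_boot all_order all_algebra zify.
Import Order.TTheory GRing.Theory Num.Theory.
Local Open Scope ring_scope.

Fixpoint C2 (L : seq int) : seq int :=
  if L is x :: P then (x + x) :: [seq x + y | y <- P] ++ C2 P else [::].
Fixpoint C3 (L : seq int) : seq int :=
  if L is x :: P then [seq x + y | y <- C2 (x :: P)] ++ C3 P else [::].
Fixpoint Daux (L cs : seq int) : seq int :=
  if cs is c :: cs' then [seq y - c | y <- C2 (rem c L)] ++ Daux L cs' else [::].

Lemma C2_size L : (2 * size (C2 L) = size L * (size L).+1)%N.
Proof. elim: L => [|x P IH] //=; rewrite size_cat size_map; lia. Qed.

Lemma C3_size L : (6 * size (C3 L) = size L * (size L).+1 * (size L).+2)%N.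
Proof.
elim: L => [|x P IH] //.
change (6 * size ([seq (x + y)%R | y <- C2 (x :: P)] ++ C3 P) = (size P).+1 * (size P).+2 * (size P).+3)%N.
rewrite size_cat size_map.
have := C2_size (x :: P) => /= H; nia.
Qed.

Lemma Daux_size L cs : all (mem L) cs ->
  (2 * size (Daux L cs) = size cs * ((size L).-1 * size L))%N.
Proof.
elim: cs => [|c cs IH] //= /andP[Hc Hcs]; rewrite size_cat size_map.
have := C2_size (rem c L); rewrite (size_rem Hc) => H.
have := IH Hcs. case: (size L) H => [|n] /= H; nia.
Qed.

Lemma C2_mem L a b : a \in L -> b \in L -> a + b \in C2 L.
Proof.
elim: L => [|x P IH] //= Ha0 Hb0; rewrite in_cons mem_cat.
move: Ha0 Hb0; rewrite !in_cons => /orP[/eqP->|Ha] /orP[/eqP->|Hb]; rewrite ?eqxx //.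
- by rewrite (map_f (fun y => x + y) Hb) orbT.
- by rewrite addrC (map_f (fun y => x + y) Ha) orbT.
- by rewrite IH // !orbT.
Qed.

Lemma C3_mem L a b c : a \in L -> b \in L -> c \in L -> a + b + c \in C3 L.
Proof.
elim: L => [|x P IH] // Ha Hb Hc.
change (a + b + c \in [seq x + y | y <- C2 (x :: P)] ++ C3 P); rewrite mem_cat.
move: (Ha) (Hb) (Hc) => /predU1P[Ea|Ha'] /predU1P[Eb|Hb'] /predU1P[Ec|Hc'];
  try (apply/orP; right; by apply: IH).
all: apply/orP; left.
all: first [ rewrite Ea -addrA; apply: map_f; exact: C2_mem
           | rewrite Eb (addrC a) -addrA; apply: map_f; exact: C2_mem
           | rewrite Ec addrC; apply: map_f; exact: C2_mem ].
Qed.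

Lemma Daux_mem L cs a b c : a \in L -> b \in L -> c \in cs -> a != c -> b != c ->
  a + b - c \in Daux L cs.
Proof.
move=> Ha Hb; elim: cs => [|d cs IH] //=; rewrite in_cons mem_cat => /orP[/eqP->|Hc] Hac Hbc.
- by rewrite (map_f (fun y => y - d)) // C2_mem // rem_mem.
- by rewrite IH ?orbT.
Qed.

Definition Scov L := C3 L ++ Daux L L.

Lemma B_mem L a b c : 0 \in L -> a \in L -> b \in L -> c \in L -> a + b - c \in Scov L.
Proof.
move=> H0 Ha Hb Hc; rewrite mem_cat.
have [Eac|Nac] := eqVneq a c.
  by rewrite Eac (addrC c) addrK -(addr0 b) -(addr0 (b + 0)) C3_mem.
have [Ebc|Nbc] := eqVneq b c.
  by rewrite Ebc addrK -(addr0 a) -(addr0 (a + 0)) C3_mem.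
by rewrite Daux_mem ?orbT.
Qed.

Lemma A_mem L a b c : a \in L -> b \in L -> c \in L -> a + b + c \in Scov L.
Proof. by move=> *; rewrite mem_cat C3_mem. Qed.

Definition Tcov L := Scov L ++ map -%R (Scov L).

Lemma Scov_size L : (6 * size (Scov L) =
   size L * (size L).+1 * (size L).+2 + 3 * (size L * ((size L).-1 * size L)))%N.
Proof.
rewrite /Scov size_cat mulnDr C3_size.
have := @Daux_size L L; rewrite (_ : all _ _ = true); last by apply/allP.
case: (size L) => [|n] /=; lia.
Qed.

Lemma tv_memE N (p : 'I_N -> int) f x : x \in triple_vals p f ->
  exists i j k, x = f (p i) (p j) (p k).
Proof.
by move=> /flattenP[s1 /mapP[i _ ->] /flattenP[s2 /mapP[j _ ->] /mapP[k _ ->]]]; exists i, j, k.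
Qed.

Lemma tv_memI N (p : 'I_N -> int) f x i j k : x = f (p i) (p j) (p k) ->
  x \in triple_vals p f.
Proof.
move=> ->; apply/flattenP; eexists; first by apply/mapP; exists i; [rewrite mem_enum|reflexivity].
apply/flattenP; eexists; first by apply/mapP; exists j; [rewrite mem_enum|reflexivity].
by apply/mapP; exists k; [rewrite mem_enum|reflexivity].
Qed.

Lemma upper N (p : 'I_N -> int) (i0 : 'I_N) (h0 : p i0 = 0) :
  (size (Phi_u p) <= size (Tcov [seq p i | i <- enum 'I_N]))%N.
Proof.
set L := [seq p i | i <- enum 'I_N].
have mL : forall i, p i \in L by move=> i; apply: map_f; rewrite mem_enum.
have m0 : 0 \in L by rewrite -h0.
apply: uniq_leq_size; first exact: undup_uniq.
move=> x; rewrite mem_undup /Tcov mem_cat => Hx; rewrite !mem_cat in Hx.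
case/or4P: Hx => /tv_memE[i [j [k ->]]]; cbv beta; rewrite mem_cat.
- by apply/orP; left; apply: A_mem.
- by apply/orP; left; apply: B_mem.
- apply/orP; right; rewrite (_ : _ + _ = - (p i + p j - p k)); last by lia.
  by apply: map_f; rewrite B_mem.
- apply/orP; right; rewrite (_ : _ - _ = - (p i + p j + p k)); last by lia.
  by apply: map_f; rewrite A_mem.
Qed.

Lemma arith (n s : nat) : (6 * s = n.+1 * n.+2 * n.+3 + 3 * (n.+1 * (n * n.+1)) ->
  (s + s) * 3 <= 4 * n.+1 ^ 3 + 3 * n.+1 ^ 2 - n.+1 + 3)%N.
Proof.
move=> H; rewrite !expnS expn0 !muln1; nia.
Qed.

Lemma disj (s1 s2 : seq int) c : (forall x, x \in s1 -> x < c) ->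
  (forall y, y \in s2 -> c <= y) -> ~~ has (mem s1) s2.
Proof.
move=> H1 H2; apply/hasPn => y Hy; apply/negP => Hx.
have := H1 _ Hx; have := H2 _ Hy; lia.
Qed.

Theorem theorem1 (N : nat) (hN : (1 <= N)%N) (p : 'I_N -> int)
  (hp0 : forall i : 'I_N, nat_of_ord i = 0%N -> p i = 0)
  (hinc : forall i j : 'I_N, (i < j)%N -> p i < p j) :
  (6 * N - 5 <= size (Phi_u p))%N /\
  (size (Phi_u p) <= (4 * N ^ 3 + 3 * N ^ 2 - N + 3) %/ 3)%N.
Proof.
case: N hN p hp0 hinc => [//|n] _ p hp0 hinc.
have p0 : p ord0 = 0 by apply: hp0.
have pge0 i : 0 <= p i.
  case: (eqVneq (val i) 0%N) => [/hp0 ->//|H]; rewrite -p0; apply/ltW/hinc.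
  by rewrite /= lt0n.
have pleM i : p i <= p ord_max.
  case: (ltnP i n) => H; first by apply/ltW/hinc.
  have -> // : i = ord_max by apply/val_inj => /=; have := ltn_ord i; lia.
have qpos (i : 'I_n) : 0 < p (lift ord0 i) by rewrite -p0; apply: hinc.
have qleM (i : 'I_n) := pleM (lift ord0 i).
have pinj : injective p.
  move=> i j E; apply/val_inj; case: (ltngtP i j) => // H; have := hinc _ _ H;
  by rewrite E ltxx.
have qinj : injective (fun i : 'I_n => p (lift ord0 i)).
  by move=> i j /pinj /lift_inj.
split; last first.
  apply: leq_trans (@upper _ p ord0 p0) _; rewrite /Tcov size_cat size_map.
  have := Scov_size [seq p i | i <- enum 'I_n.+1].
  rewrite size_map size_enum_ord leq_divRL //; exact: arith.
pose G0 := [seq p i | i <- enum 'I_n.+1].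
pose G1 := [seq p ord_max + p (lift ord0 i) | i <- enum 'I_n].
pose G2 := [seq p ord_max + p ord_max + p (lift ord0 i) | i <- enum 'I_n].
pose H0 := [seq - p (lift ord0 i) | i <- enum 'I_n].
pose H1 := [seq - p ord_max - p (lift ord0 i) | i <- enum 'I_n].
pose H2 := [seq - p ord_max - p ord_max - p (lift ord0 i) | i <- enum 'I_n].
have sW : size (H2 ++ H1 ++ H0 ++ G0 ++ G1 ++ G2) = (6 * n.+1 - 5)%N.
  rewrite !size_cat !size_map -!enumT !size_enum_ord; lia.
rewrite -sW; apply: uniq_leq_size.
  have uG0 : uniq G0 by rewrite map_inj_uniq ?enum_uniq.
  have uG1 : uniq G1 by rewrite map_inj_uniq ?enum_uniq // => i j /addrI /qinj.
  have uG2 : uniq G2 by rewrite map_inj_uniq ?enum_uniq // => i j /addrI /qinj.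
  have uH0 : uniq H0 by rewrite map_inj_uniq ?enum_uniq // => i j /oppr_inj /qinj.
  have uH1 : uniq H1 by rewrite map_inj_uniq ?enum_uniq // => i j /addrI /oppr_inj /qinj.
  have uH2 : uniq H2 by rewrite map_inj_uniq ?enum_uniq // => i j /addrI /oppr_inj /qinj.
  have d1 : ~~ has (mem H2) (H1 ++ H0 ++ G0 ++ G1 ++ G2).
    apply: (@disj _ _ (- p ord_max - p ord_max)).
      by move=> x /mapP[i _ ->]; have := qpos i; lia.
    move=> y; rewrite !mem_cat; repeat case/orP; move/mapP=> [i _ ->];
      first [have := qpos i; have := qleM i | have := pge0 i; have := pleM i]; lia.
  have d2 : ~~ has (mem H1) (H0 ++ G0 ++ G1 ++ G2).
    apply: (@disj _ _ (- p ord_max)).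
      by move=> x /mapP[i _ ->]; have := qpos i; lia.
    move=> y; rewrite !mem_cat; repeat case/orP; move/mapP=> [i _ ->];
      first [have := qpos i; have := qleM i | have := pge0 i; have := pleM i]; lia.
  have d3 : ~~ has (mem H0) (G0 ++ G1 ++ G2).
    apply: (@disj _ _ 0).
      by move=> x /mapP[i _ ->]; have := qpos i; lia.
    move=> y; rewrite !mem_cat; repeat case/orP; move/mapP=> [i _ ->];
      first [have := qpos i; have := qleM i | have := pge0 i; have := pleM i]; lia.
  have d4 : ~~ has (mem G0) (G1 ++ G2).
    apply: (@disj _ _ (p ord_max + 1)).
      by move=> x /mapP[i _ ->]; have := pleM i; lia.
    move=> y; rewrite !mem_cat; repeat case/orP; move/mapP=> [i _ ->];
      first [have := qpos i; have := qleM i | have := pge0 i; have := pleM i]; lia.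
  have d5 : ~~ has (mem G1) G2.
    apply: (@disj _ _ (p ord_max + p ord_max + 1)).
      by move=> x /mapP[i _ ->]; have := qleM i; lia.
    move=> y /mapP[i _ ->]; have := qpos i; lia.
  by rewrite !cat_uniq uG0 uG1 uG2 uH0 uH1 uH2 d1 d2 d3 d4 d5.
move=> y; rewrite !mem_cat; rewrite mem_undup !mem_cat.
case/orP; [|case/orP; [|case/orP; [|case/orP; [|case/orP]]]]; move/mapP=> [i _ ->].
- apply/or4P; apply: Or44; apply: (@tv_memI _ p _ _ ord_max ord_max (lift ord0 i)).
  by cbv beta.
- apply/or4P; apply: Or44; apply: (@tv_memI _ p _ _ ord_max (lift ord0 i) ord0).
  by cbv beta; rewrite p0 subr0.
- apply/or4P; apply: Or44; apply: (@tv_memI _ p _ _ (lift ord0 i) ord0 ord0).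
  by cbv beta; rewrite p0 !subr0.
- apply/or4P; apply: Or41; apply: (@tv_memI _ p _ _ i ord0 ord0).
  by cbv beta; rewrite p0 !addr0.
- apply/or4P; apply: Or41; apply: (@tv_memI _ p _ _ ord_max (lift ord0 i) ord0).
  by cbv beta; rewrite p0 !addr0.
- apply/or4P; apply: Or41; apply: (@tv_memI _ p _ _ ord_max ord_max (lift ord0 i)).
  by cbv beta.
Qed.
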